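(* For every contractor network and every $t\in\mathbb N$, $$d_{TV}\big(\pi,\Pr(\mathbf X^t\in\cdot)\big)\le n\,\|(\mathbf A\mathbf W)^t\|.$$ Consequently, if $G$ is a directed acyclic graph (no directed cycles, no self-loops) and $d>0$ is the maximum number of edges in a directed path of $G$, then $t_{\mathrm{mix}}(\epsilon)\le d$ for all $\epsilon>0$; and for a general contractor network, for every $\epsilon>0$, $$t_{\mathrm{mix}}(\epsilon)\le 2+\frac{2}{1-\|(\mathbf A\mathbf W)^2\|}\log\Big(\frac n\epsilon\Big).$$
   Context: A contractor network is a finite directed graph $G=(\mathcal V,\mathcal E)$ with $n=|\mathcal V|$ nodes, without multiple edges (self-loops and directed cycles allowed in general), in which every node has at least one incident edge. For $i\in\mathcal V$ let $\delta_{\mathrm{in}}(i)=\{j:(j,i)\in\mathcal E\}$ and $\delta_{\mathrm{out}}(i)=\{k:(i,k)\in\mathcal E\}$. A node $i$ is a pure principal if $\delta_{\mathrm{in}}(i)=\emptyset$, a pure obligee if $\delta_{\mathrm{out}}(i)=\emptyset$, and an intermediary otherwise. Each edge $(j,i)\in\mathcal E$ carries a weight $w_{ij}>0$; $w_{ij}=0$ if $(j,i)\notin\mathcal E$; for every $i$ with $\delta_{\mathrm{in}}(i)\neq\emptyset$, $\sum_{j\in\delta_{\mathrm{in}}(i)}w_{ij}=1$; $\mathbf W=(w_{ij})$. Risk scores: $r_i\in(0,1)$ if $i$ is not a pure obligee, $r_i=0$ for pure obligees. Propagation parameters: $\alpha_i=0$ for pure principals, $\alpha_i=1$ for pure obligees,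 $\alpha_i\in(0,1)$ for intermediaries; $\mathbf A=\mathrm{diag}(\alpha_i)$. Failure process $(\mathbf X^t)_{t\in\mathbb N}$ on $\{0,1\}^n$: independent $X_i^0\sim\mathrm{Bernoulli}(r_i)$; for $t\ge0$, conditionally on $(\mathbf X^0,\dots,\mathbf X^t)$ the $X_i^{t+1}$ are independent with $X_i^{t+1}\sim\mathrm{Bernoulli}\big((1-\alpha_i)r_i+\alpha_i\sum_{j\in\delta_{\mathrm{in}}(i)}w_{ij}X_j^t\big)$. This is a Markov chain whose law converges to a unique stationary distribution $\pi$ on $\{0,1\}^n$. For distributions $P,Q$ on $\{0,1\}^n$, $d_{TV}(P,Q)=\max_{S\subseteq\{0,1\}^n}|P(S)-Q(S)|$, and $t_{\mathrm{mix}}(\epsilon)=\inf\{t\ge0:d_{TV}(\pi,\Pr(\mathbf X^t\in\cdot))\le\epsilon\}$. $\|\mathbf M\|$ is the induced $\ell_\infty$ matrix norm (maximum absolute row sum). *)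

(* Defs.v *)
From HB Require Import structures.
From mathcomp Require Import all_boot all_order all_algebra.
From mathcomp Require Import reals exp.
Set Implicit Arguments. Unset Strict Implicit. Unset Printing Implicit Defensive.
Import Order.TTheory GRing.Theory Num.Theory.
Local Open Scope ring_scope.

Section ContractorNetwork.
Variables (R : realType) (n : nat).

(* Convention: [E j i] means that (j,i) is a directed edge, j -> i. *)
Definition has_in (E : rel 'I_n) (i : 'I_n) : bool := [exists j, E j i].
Definition has_out (E : rel 'I_n) (i : 'I_n) : bool := [exists k, E i k].
Definition pure_principal E i := ~~ has_in E i.
Definition pure_obligee E i := ~~ has_out E i.
Definition intermediary E i := has_in E i && has_out E i.

(* w i j = w_{ij}, weight of edge (j,i); alpha i = alpha_i; r i = r_i. *)
Definition contractor_network (E : rel 'I_n) (w : 'M[R]_n)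
    (r : 'I_n -> R) (alpha : 'I_n -> R) : Prop :=
  [/\ (forall i, has_in E i || has_out E i),
      [/\ (forall i j, E j i -> 0 < w i j),
          (forall i j, ~~ E j i -> w i j = 0) &
          (forall i, has_in E i -> \sum_(j | E j i) w i j = 1)],
      [/\ (forall i, ~~ pure_obligee E i -> 0 < r i < 1) &
          (forall i, pure_obligee E i -> r i = 0)] &
      [/\ (forall i, pure_principal E i -> alpha i = 0),
          (forall i, pure_obligee E i -> alpha i = 1) &
          (forall i, intermediary E i -> 0 < alpha i < 1)]].

Definition state := {ffun 'I_n -> bool}.

Definition bern (p : R) (b : bool) : R := if b then p else 1 - p.

Definition init_law (r : 'I_n -> R) (x : state) : R :=
  \prod_i bern (r i) (x i).

(* success probability of X_i^{t+1} given X^t = x *)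
Definition next_prob (w : 'M[R]_n) (r alpha : 'I_n -> R) (x : state) (i : 'I_n) : R :=
  (1 - alpha i) * r i + alpha i * \sum_j w i j * (x j)%:R.

Definition kernel w r alpha (x y : state) : R :=
  \prod_i bern (next_prob w r alpha x i) (y i).

Fixpoint law w r alpha (t : nat) : state -> R :=
  match t with
  | 0 => init_law r
  | t'.+1 => fun y => \sum_x law w r alpha t' x * kernel w r alpha x y
  end.

Definition is_stationary w r alpha (pi : state -> R) : Prop :=
  [/\ (forall x, 0 <= pi x), \sum_x pi x = 1 &
      (forall y, \sum_x pi x * kernel w r alpha x y = pi y)].

Definition dTV (P Q : state -> R) : R :=
  \big[Num.max/0]_(S : {set state}) `|\sum_(x in S) P x - \sum_(x in S) Q x|.

(* mixing time: inf {t | dTV(pi, law t) <= eps}; None encodes +infinity *)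
Definition tmix w r alpha (pi : state -> R) (eps : R) : option nat :=
  let P := fun t : nat => dTV pi (law w r alpha t) <= eps in
  match boolp.pselect (exists t, P t) with
  | left h => Some (ex_minn h)
  | right _ => None
  end.

(* induced l_infinity matrix norm: maximum absolute row sum *)
Definition mx_inf_norm (M : 'M[R]_n) : R :=
  \big[Num.max/0]_(i < n) \sum_(j < n) `|M i j|.

(* the matrix A W with A = diag(alpha) *)
Definition AW (w : 'M[R]_n) (alpha : 'I_n -> R) : 'M[R]_n :=
  \matrix_(i, j) (alpha i * w i j).

Definition mxpow (M : 'M[R]_n) (t : nat) : 'M[R]_n := iter t (mulmx M) 1%:M.

Definition acyclic (E : rel 'I_n) : Prop :=
  forall (i : 'I_n) (p : seq 'I_n), p != [::] -> path E i p -> last i p != i.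

Definition max_path_length (E : rel 'I_n) (d : nat) : Prop :=
  (exists (i : 'I_n) (p : seq 'I_n), path E i p /\ size p = d) /\
  (forall (i : 'I_n) (p : seq 'I_n), path E i p -> (size p <= d)%N).

End ContractorNetwork.

(* Main.v *)
Require Import Defs.
From HB Require Import structures.
From mathcomp Require Import all_boot all_order all_algebra.
From mathcomp Require Import reals exp.
From mathcomp Require Import ring lra.
Import Order.TTheory GRing.Theory Num.Theory.
Local Open Scope ring_scope.

Section Proofs.
Variables (R : realType) (n : nat) (E : rel 'I_n) (w : 'M[R]_n)
    (r alpha : 'I_n -> R) (pi : state n -> R).
Hypothesis HC : contractor_network E w r alpha.
Hypothesis HS : is_stationary w r alpha pi.

Local Notation S := (state n).
Local Notation K := (kernel w r alpha).
Local Notation p := (next_prob w r alpha).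
Local Notation M := (AW w alpha).

Lemma inc_edge i : has_in E i || has_out E i.
Proof. by case: HC. Qed.
Lemma w_pos i j : E j i -> 0 < w i j.
Proof. by case: HC => _ [h _ _] _ _; apply: h. Qed.
Lemma w_zero i j : ~~ E j i -> w i j = 0.
Proof. by case: HC => _ [_ h _] _ _; apply: h. Qed.
Lemma w_sum1 i : has_in E i -> \sum_(j | E j i) w i j = 1.
Proof. by case: HC => _ [_ _ h] _ _; apply: h. Qed.

Lemma w_ge0 i j : 0 <= w i j.
Proof. by case: (boolP (E j i)) => h; [exact/ltW/w_pos | rewrite w_zero]. Qed.

Lemma w_sumE i : \sum_j w i j = if has_in E i then 1 else 0.
Proof.
case: ifP => h.
  rewrite -(w_sum1 _ h) [RHS]big_mkcond /=; apply: eq_bigr => j _.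
  by case: ifP => // /negbT /w_zero.
apply: big1 => j _; apply: w_zero; apply/negP => ej.
by move/negbT: h => /existsPn /(_ j); rewrite ej.
Qed.

Lemma w_sum_le1 i : \sum_j w i j <= 1.
Proof. by rewrite w_sumE; case: ifP. Qed.
Lemma w_sum_ge0 i : 0 <= \sum_j w i j.
Proof. by apply: sumr_ge0 => j _; apply: w_ge0. Qed.

Lemma r01 i : 0 <= r i <= 1.
Proof.
case: HC => _ _ [h1 h2] _.
case: (boolP (pure_obligee E i)) => h; first by rewrite h2 // lexx ler01.
by case/andP: (h1 _ h) => a b; apply/andP; split; apply: ltW.
Qed.

Lemma alpha01 i : 0 <= alpha i <= 1.
Proof.
case: HC => _ _ _ [h1 h2 h3].
case: (boolP (pure_principal E i)) => hp; first by rewrite h1 // lexx ler01.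
case: (boolP (pure_obligee E i)) => ho; first by rewrite h2 // ler01 lexx.
have : intermediary E i by rewrite /intermediary; move: hp ho; rewrite /pure_principal /pure_obligee !negbK => -> ->.
by move/h3 => /andP [a b]; rewrite ltW // ltW.
Qed.

Lemma alpha_lt1 i : has_out E i -> alpha i < 1.
Proof.
case: HC => _ _ _ [h1 h2 h3] ho.
case: (boolP (has_in E i)) => hi.
  by case/andP: (h3 i (introT andP (conj hi ho))).
by rewrite h1 ?ltr01.
Qed.

Lemma principal_has_out i : pure_principal E i -> has_out E i.
Proof. by move: (inc_edge i); rewrite /pure_principal; case: (has_in E i). Qed.

Lemma r_principal i : pure_principal E i -> 0 < r i < 1.
Proof.
case: HC => _ _ [h1 h2] _ hp; apply: h1.
by rewrite /pure_obligee negbK principal_has_out.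
Qed.

Lemma alpha_principal i : pure_principal E i -> alpha i = 0.
Proof. by case: HC => _ _ _ [h _ _]; apply: h. Qed.

Lemma p01 x i : 0 <= p x i <= 1.
Proof.
rewrite /next_prob.
case/andP: (alpha01 i) => a0 a1; case/andP: (r01 i) => r0 r1.
have s0 : 0 <= \sum_j w i j * (x j)%:R.
  by apply: sumr_ge0 => j _; apply: mulr_ge0 => //; apply: w_ge0.
have s1 : \sum_j w i j * (x j)%:R <= 1.
  apply: le_trans (w_sum_le1 i); apply: ler_sum => j _.
  by case: (x j); rewrite ?mulr1 ?mulr0 ?w_ge0.
apply/andP; split.
  by apply: addr_ge0; apply: mulr_ge0 => //; rewrite subr_ge0.
apply: (@le_trans _ _ ((1 - alpha i) * 1 + alpha i * 1)); last by rewrite !mulr1 subrK.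
by apply: lerD; apply: ler_wpM2l => //; rewrite subr_ge0.
Qed.

Lemma p_principal x i : pure_principal E i -> p x i = r i.
Proof. by move=> h; rewrite /next_prob alpha_principal // subr0 mul1r mul0r addr0. Qed.

Lemma AW_ge0 i j : 0 <= M i j.
Proof. by rewrite mxE; apply: mulr_ge0; [case/andP: (alpha01 i) | apply: w_ge0]. Qed.

Lemma p_diff x y i : `|p x i - p y i| <= \sum_j M i j * (x j != y j)%:R.
Proof.
have -> : p x i - p y i = alpha i * (\sum_j w i j * (x j)%:R - \sum_j w i j * (y j)%:R).
  by rewrite /next_prob; ring.
rewrite -sumrB.
rewrite normrM ger0_norm; last by case/andP: (alpha01 i).
apply: (@le_trans _ _ (alpha i * \sum_j `|w i j * (x j)%:R - w i j * (y j)%:R|)).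
  by apply: ler_wpM2l; [case/andP: (alpha01 i) | apply: ler_norm_sum].
rewrite mulr_sumr; apply: ler_sum => j _; rewrite mxE -mulrA.
apply: ler_wpM2l; first by case/andP: (alpha01 i).
rewrite -mulrBr normrM ger0_norm ?w_ge0 //.
case: (x j); case: (y j); rewrite /= ?subrr ?normr0 ?mulr0 ?mulr1 ?normrN ?subr0 ?sub0r ?normrN ?normr1. all: by rewrite ?mulr1n ?mulr1.
Qed.


Definition cb (a b : R) (u v : bool) : R :=
  if u then (if v then Num.min a b else a - Num.min a b)
  else (if v then b - Num.min a b else 1 - Num.max a b).
Arguments cb : simpl never.

Lemma cb_ge0 a b u v : 0 <= a <= 1 -> 0 <= b <= 1 -> 0 <= cb a b u v.
Proof.
move=> /andP[a0 a1] /andP[b0 b1]; rewrite /cb.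
case: u; case: v; rewrite ?subr_ge0 ?ge_min ?ge_max ?le_min ?lexx ?orbT ?a0 ?b0 ?a1 ?b1 //.
Qed.

Lemma cb_sumv a b u : cb a b u true + cb a b u false = bern a u.
Proof.
rewrite /cb /bern; case: u; first by rewrite addrC subrK.
have : Num.min a b + Num.max a b = a + b.
  by case: (leP a b) => h; rewrite // addrC.
move=> h; lra.
Qed.

Lemma cb_sumu a b v : cb a b true v + cb a b false v = bern b v.
Proof.
rewrite /cb /bern; case: v; first by rewrite subrKC.
have : Num.min a b + Num.max a b = a + b.
  by case: (leP a b) => h; rewrite // addrC.
move=> h; lra.
Qed.

Lemma cb_dis a b :
  \sum_u \sum_v cb a b u v * (u != v)%:R = `|a - b|.
Proof.
rewrite !big_bool /= /cb !mulr0 !mulr1n !mulr1 !addr0 add0r.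
case: (leP a b) => h.
  by rewrite subrr add0r ler0_norm ?subr_le0 // opprB.
by rewrite subrr addr0 gtr0_norm ?subr_gt0.
Qed.

Lemma cb_tot a b : \sum_u \sum_v cb a b u v = 1.
Proof. by rewrite !big_bool /= !cb_sumv /bern addrC subrK. Qed.

Lemma prodsum2 (F : 'I_n -> bool -> bool -> R) :
  \sum_(x : S) \sum_(y : S) \prod_i F i (x i) (y i) = \prod_i \sum_u \sum_v F i u v.
Proof.
rewrite (bigA_distr_bigA (fun i u => \sum_v F i u v)).
apply: eq_bigr => x _.
by rewrite (bigA_distr_bigA (fun i v => F i (x i) v)).
Qed.

Lemma prodsum1 (F : 'I_n -> bool -> R) :
  \sum_(x : S) \prod_i F i (x i) = \prod_i \sum_u F i u.
Proof. by rewrite (bigA_distr_bigA F). Qed.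

Definition Kc (z z' : S * S) : R :=
  \prod_i cb (p z.1 i) (p z.2 i) (z'.1 i) (z'.2 i).

Lemma Kc_ge0 z z' : 0 <= Kc z z'.
Proof. by apply: prodr_ge0 => i _; apply: cb_ge0; apply: p01. Qed.

Lemma Kc_marg1 z x' : \sum_(y' : S) Kc z (x', y') = K z.1 x'.
Proof.
rewrite /Kc /= (prodsum1 (fun i v => cb (p z.1 i) (p z.2 i) (x' i) v)).
by apply: eq_bigr => i _; rewrite big_bool /= cb_sumv.
Qed.

Lemma Kc_marg2 z y' : \sum_(x' : S) Kc z (x', y') = K z.2 y'.
Proof.
rewrite /Kc /= (prodsum1 (fun i u => cb (p z.1 i) (p z.2 i) u (y' i))).
by apply: eq_bigr => i _; rewrite big_bool /= cb_sumu.
Qed.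

Lemma Kc_dis z k :
  \sum_(z' : S * S) Kc z z' * (z'.1 k != z'.2 k)%:R = `|p z.1 k - p z.2 k|.
Proof.
rewrite -(pair_bigA _ (fun x y => Kc z (x, y) * (x k != y k)%:R)) /=.
pose G i u v := cb (p z.1 i) (p z.2 i) u v * (if i == k then (u != v)%:R else 1).
have -> : \sum_(x : S) \sum_(y : S) Kc z (x, y) * (x k != y k)%:R =
          \sum_(x : S) \sum_(y : S) \prod_i G i (x i) (y i).
  apply: eq_bigr => x _; apply: eq_bigr => y _.
  rewrite /Kc /G big_split /=; congr (_ * _).
  by rewrite (bigD1 k) //= eqxx big1 ?mulr1 // => i /negPf ->.
have h1 : \prod_(i | i != k) \sum_u \sum_v G i u v = 1.
  apply: big1 => i /negPf ik.
  rewrite -[RHS](cb_tot (p z.1 i) (p z.2 i)); apply: eq_bigr => u _; apply: eq_bigr => v _.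
  by rewrite /G ik mulr1.
have h2 : \sum_u \sum_v G k u v = `|p z.1 k - p z.2 k|.
  rewrite -cb_dis; apply: eq_bigr => u _; apply: eq_bigr => v _.
  by rewrite /G eqxx.
by rewrite prodsum2 (bigD1 k) // h1 h2 /= mulr1.
Qed.

Fixpoint gam (g0 : S * S -> R) t : S * S -> R :=
  match t with
  | 0 => g0
  | t'.+1 => fun z' => \sum_(z : S * S) gam g0 t' z * Kc z z'
  end.

Lemma pairE (F : S * S -> R) : \sum_(z : S * S) F z = \sum_(x : S) \sum_(y : S) F (x, y).
Proof. by rewrite pair_bigA; apply: eq_bigr => -[]. Qed.

Lemma gam_ge0 g0 : (forall z, 0 <= g0 z) -> forall t z, 0 <= gam g0 t z.
Proof.
move=> h; elim=> [|t IH] z //=.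
by apply: sumr_ge0 => z' _; apply: mulr_ge0 => //; apply: Kc_ge0.
Qed.

Lemma stat_eq y : \sum_(x : S) pi x * K x y = pi y.
Proof. by case: HS => _ _ ->. Qed.

Lemma gam_marg g0 :
  (forall x, \sum_(y : S) g0 (x, y) = pi x) ->
  (forall y, \sum_(x : S) g0 (x, y) = init_law r y) ->
  forall t, (forall x, \sum_(y : S) gam g0 t (x, y) = pi x) /\
            (forall y, \sum_(x : S) gam g0 t (x, y) = law w r alpha t y).
Proof.
move=> h1 h2; elim=> [|t [IH1 IH2]] //=; split.
  move=> x'; rewrite exchange_big /=.
  transitivity (\sum_(z : S * S) gam g0 t z * K z.1 x').
    by apply: eq_bigr => z _; rewrite -mulr_sumr Kc_marg1.
  rewrite pairE -stat_eq; apply: eq_bigr => x _ /=.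
  by rewrite -mulr_suml IH1.
move=> y'; rewrite exchange_big /=.
transitivity (\sum_(z : S * S) gam g0 t z * K z.2 y').
  by apply: eq_bigr => z _; rewrite -mulr_sumr Kc_marg2.
rewrite pairE exchange_big /=; apply: eq_bigr => y _ /=.
by rewrite -mulr_suml IH2.
Qed.

Definition ee g0 t k := \sum_(z : S * S) gam g0 t z * (z.1 k != z.2 k)%:R.

Lemma ee_ge0 g0 : (forall z, 0 <= g0 z) -> forall t k, 0 <= ee g0 t k.
Proof.
move=> h t k; apply: sumr_ge0 => z _; apply: mulr_ge0; first exact: gam_ge0.
by rewrite ler0n.
Qed.

Lemma ee_step g0 : (forall z, 0 <= g0 z) ->
  forall t k, ee g0 t.+1 k <= \sum_j M k j * ee g0 t j.
Proof.
move=> h t k; rewrite /ee /=.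
rewrite (eq_bigr (fun z => \sum_z0 gam g0 t z0 * (Kc z0 z * (z.1 k != z.2 k)%:R))); last first.
  by move=> z _; rewrite mulr_suml; apply: eq_bigr => z0 _; rewrite mulrA.
rewrite exchange_big /=.
rewrite (eq_bigr (fun z => gam g0 t z * `|p z.1 k - p z.2 k|)); last first.
  by move=> z _; rewrite -mulr_sumr Kc_dis.
apply: (@le_trans _ _ (\sum_(z : S * S) gam g0 t z * \sum_j M k j * (z.1 j != z.2 j)%:R)).
  apply: ler_sum => z _; apply: ler_wpM2l; first exact: gam_ge0.
  exact: p_diff.
rewrite (eq_bigr (fun z => \sum_j gam g0 t z * (M k j * (z.1 j != z.2 j)%:R))); last first.
  by move=> z _; rewrite mulr_sumr.
rewrite exchange_big /=; apply: ler_sum => j _.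
rewrite mulr_sumr; apply: ler_sum => z _.
by rewrite mulrCA mulrA.
Qed.

Definition mxpow' := mxpow.

Lemma ee_bound g0 : (forall z, 0 <= g0 z) ->
  forall t k, ee g0 t k <= \sum_j (mxpow M t) k j * ee g0 0 j.
Proof.
move=> h; elim=> [|t IH] k.
  rewrite /= (bigD1 k) //= big1 => [|j jk]; first by rewrite mxE eqxx mul1r addr0.
  by rewrite mxE eq_sym (negPf jk) mul0r.
apply: le_trans (ee_step _ h t k) _.
apply: (@le_trans _ _ (\sum_l M k l * \sum_j (mxpow M t) l j * ee g0 0 j)).
  by apply: ler_sum => l _; apply: ler_wpM2l; [apply: AW_ge0 | apply: IH].
rewrite /= [X in _ <= X](eq_bigr (fun j => \sum_l M k l * (mxpow M t) l j * ee g0 0 j)).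
  by rewrite exchange_big /=; apply: ler_sum => l _; rewrite mulr_sumr; apply: ler_sum => j _; rewrite mulrA.
by move=> j _; rewrite mxE mulr_suml.
Qed.

Lemma ind_diff (A : {set S}) (x y : S) :
  `|(x \in A)%:R - (y \in A)%:R| <= \sum_k (x k != y k)%:R :> R.
Proof.
have s0 : 0 <= \sum_k (x k != y k)%:R :> R by apply: sumr_ge0 => k _; rewrite ler0n.
case: (eqVneq x y) => [-> | nxy]; first by rewrite subrr normr0; apply: sumr_ge0 => k _; rewrite ler0n.
have : ~~ [forall k, x k == y k].
  by apply: contra nxy => /forallP hh; apply/eqP/ffunP => k; apply/eqP.
case/forallPn => k hk.
apply: (@le_trans _ _ 1).
  by case: (x \in A); case: (y \in A); rewrite /= ?subrr ?normr0 ?ler01 ?subr0 ?sub0r ?normrN ?normr1 ?mulr1n ?lexx.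
rewrite (bigD1 k) //= hk /= mulr1n lerDl.
by apply: sumr_ge0 => j _; rewrite ler0n.
Qed.

Lemma dTV_bound g0 :
  (forall z, 0 <= g0 z) ->
  (forall x, \sum_(y : S) g0 (x, y) = pi x) ->
  (forall y, \sum_(x : S) g0 (x, y) = init_law r y) ->
  forall t, dTV pi (law w r alpha t) <= \sum_k ee g0 t k.
Proof.
move=> h0 h1 h2 t.
have [m1 m2] := gam_marg _ h1 h2 t.
have B0 : 0 <= \sum_k ee g0 t k by apply: sumr_ge0 => k _; apply: ee_ge0.
rewrite /dTV; apply: (big_ind (fun v => v <= \sum_k ee g0 t k)) => //.
  by move=> a b ha hb; rewrite ge_max ha hb.
move=> A _.
have e1 : \sum_(x in A) pi x = \sum_(x : S) \sum_(y : S) gam g0 t (x, y) * (x \in A)%:R.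
  rewrite big_mkcond; apply: eq_bigr => x _; rewrite -mulr_suml m1.
  by case: (x \in A); rewrite ?mulr1n ?mulr1 ?mulr0.
have e2 : \sum_(x in A) law w r alpha t x = \sum_(x : S) \sum_(y : S) gam g0 t (x, y) * (y \in A)%:R.
  rewrite exchange_big big_mkcond; apply: eq_bigr => y _; rewrite -mulr_suml m2.
  by case: (y \in A); rewrite ?mulr1n ?mulr1 ?mulr0.
rewrite e1 e2 -sumrB.
apply: le_trans (ler_norm_sum _ _ _) _.
rewrite /ee.
rewrite (eq_bigr (fun k => \sum_(x : S) \sum_(y : S) gam g0 t (x, y) * (x k != y k)%:R)); last first.
  by move=> k _; rewrite pairE.
rewrite exchange_big; apply: ler_sum => x _.
rewrite exchange_big -sumrB.
apply: le_trans (ler_norm_sum _ _ _) _; apply: ler_sum => y _.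
rewrite -mulrBr normrM ger0_norm; last exact: gam_ge0.
rewrite -mulr_sumr; apply: ler_wpM2l; first exact: gam_ge0.
exact: ind_diff.
Qed.

Lemma le_bigmax_seq (F : 'I_n -> R) (s : seq 'I_n) i :
  i \in s -> F i <= \big[Num.max/0]_(j <- s) F j.
Proof.
elim: s => [|a s IH] //; rewrite in_cons big_cons le_max.
by case/orP => [/eqP -> | /IH ->]; rewrite ?lexx ?orbT.
Qed.

Lemma le_bigmax (F : 'I_n -> R) i : F i <= \big[Num.max/0]_j F j.
Proof. exact: le_bigmax_seq (mem_index_enum i). Qed.

Lemma le_norm (P : 'M[R]_n) i : \sum_j `|P i j| <= mx_inf_norm P.
Proof. exact: (le_bigmax (fun i => \sum_j `|P i j|)). Qed.

Lemma norm_le (P : 'M[R]_n) c :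
  0 <= c -> (forall i, \sum_j `|P i j| <= c) -> mx_inf_norm P <= c.
Proof.
move=> c0 h; rewrite /mx_inf_norm; apply: (big_ind (fun v => v <= c)) => //.
by move=> a b ha hb; rewrite ge_max ha hb.
Qed.

Lemma norm_ge0 (P : 'M[R]_n) : 0 <= mx_inf_norm P.
Proof.
rewrite /mx_inf_norm; apply: (big_ind (fun v => 0 <= v)) => //.
  by move=> a b ha hb; rewrite le_max ha.
by move=> i _; apply: sumr_ge0 => j _; apply: normr_ge0.
Qed.

Lemma sum_norm_bound (P : 'M[R]_n) (e : 'I_n -> R) :
  (forall j, 0 <= e j <= 1) ->
  \sum_k \sum_j P k j * e j <= n%:R * mx_inf_norm P.
Proof.
move=> he.
apply: (@le_trans _ _ (\sum_(k < n) mx_inf_norm P)); last first.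
  by rewrite sumr_const card_ord mulr_natl.
apply: ler_sum => k _; apply: le_trans (le_norm P k).
apply: ler_sum => j _; case/andP: (he j) => e0 e1.
apply: le_trans (ler_norm _) _; rewrite normrM (ger0_norm e0).
exact: ler_piMr.
Qed.

Definition gprod (z : S * S) : R := pi z.1 * init_law r z.2.

Lemma pi_ge0 x : 0 <= pi x.
Proof. by case: HS. Qed.
Lemma pi_sum : \sum_(x : S) pi x = 1.
Proof. by case: HS. Qed.

Lemma bern_ge0 (a : R) u : 0 <= a <= 1 -> 0 <= bern a u.
Proof. by case/andP => a0 a1; case: u; rewrite /bern ?subr_ge0. Qed.

Lemma init_ge0 y : 0 <= init_law r y.
Proof. by apply: prodr_ge0 => i _; apply: bern_ge0; apply: r01. Qed.

Lemma init_sum : \sum_(y : S) init_law r y = 1.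
Proof.
rewrite /init_law (prodsum1 (fun i u => bern (r i) u)).
by apply: big1 => i _; rewrite big_bool /= /bern addrC subrK.
Qed.

Lemma gprod_ge0 z : 0 <= gprod z.
Proof. by apply: mulr_ge0; [apply: pi_ge0 | apply: init_ge0]. Qed.
Lemma gprod_m1 x : \sum_(y : S) gprod (x, y) = pi x.
Proof. by rewrite /gprod /= -mulr_sumr init_sum mulr1. Qed.
Lemma gprod_m2 y : \sum_(x : S) gprod (x, y) = init_law r y.
Proof. by rewrite /gprod /= -mulr_suml pi_sum mul1r. Qed.

Lemma part1 t : dTV pi (law w r alpha t) <= n%:R * mx_inf_norm (mxpow M t).
Proof.
have he : forall j, 0 <= ee gprod 0 j <= 1.
  move=> j; rewrite (ee_ge0 _ gprod_ge0) /=.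
  apply: (@le_trans _ _ (\sum_(z : S * S) gprod z)).
    apply: ler_sum => z _; rewrite /=.
    by apply: ler_piMr; [apply: gprod_ge0 | case: (_ != _); rewrite ?ler01 ?ler0n].
  by rewrite pairE (eq_bigr _ (fun x _ => gprod_m1 x)) pi_sum.
apply: le_trans (dTV_bound _ gprod_ge0 gprod_m1 gprod_m2 t) _.
apply: le_trans _ (sum_norm_bound (mxpow M t) (ee gprod 0) he).
by apply: ler_sum => k _; apply: ee_bound; apply: gprod_ge0.
Qed.

Lemma tmix_le (eps : R) t : dTV pi (law w r alpha t) <= eps ->
  exists m, tmix w r alpha pi eps = Some m /\ (m <= t)%N.
Proof.
move=> h; rewrite /tmix.
case: (boolp.pselect _) => [ex | nex].
  by case: ex_minnP => m Pm Hm; exists m; split => //; apply: Hm.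
by exfalso; apply: nex; exists t.
Qed.

Definition agree (x y : S) : bool := [forall i, pure_principal E i ==> (x i == y i)].
Definition beta (y : S) : R := \prod_(i | pure_principal E i) bern (r i) (y i).

Lemma agreeC x y : agree x y = agree y x.
Proof.
by apply/forallP/forallP => h i; move: (h i); case: (pure_principal E i) => //= /eqP ->.
Qed.

Lemma beta_gt0 y : 0 < beta y.
Proof.
apply: prodr_gt0 => i hp; case/andP: (r_principal _ hp) => a b.
by case: (y i); rewrite /bern ?subr_gt0.
Qed.

Lemma beta_agree x y : agree x y -> beta x = beta y.
Proof.
move/forallP=> h; apply: eq_bigr => i hp.
by move: (h i); rewrite hp /= => /eqP ->.
Qed.

Lemma prod_agree (x c : S) :
  \prod_i (if pure_principal E i then (x i == c i)%:R else 1) = (agree x c)%:R :> R.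
Proof.
case: (boolP (agree x c)) => h.
  apply: big1 => i _; case: ifP => // hp.
  by move/forallP: h => /(_ i); rewrite hp /= => /eqP ->; rewrite eqxx.
case/forallPn: h => i; rewrite negb_imply => /andP [hp hne].
by rewrite (bigD1 i) //= hp (negPf hne) mul0r.
Qed.

Lemma sum_agree (q : 'I_n -> R) (c : S) :
  (forall i, pure_principal E i -> q i = r i) ->
  \sum_(x : S) (\prod_i bern (q i) (x i)) * (agree x c)%:R = beta c.
Proof.
move=> hq.
rewrite (eq_bigr (fun x : S => \prod_i (bern (q i) (x i) * (if pure_principal E i then (x i == c i)%:R else 1)))); last first.
  by move=> x _; rewrite big_split /= prod_agree.
rewrite (prodsum1 (fun i u => bern (q i) u * (if pure_principal E i then (u == c i)%:R else 1))).
rewrite /beta [RHS]big_mkcond; apply: eq_bigr => i _.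
rewrite big_bool /=; case: ifP => hp.
  by rewrite hq //; case: (c i); rewrite /= ?mulr1n ?mulr1 ?mulr0 ?addr0 ?add0r.
by rewrite !mulr1 /bern addrC subrK.
Qed.

Definition g2 (z : S * S) : R :=
  pi z.1 * init_law r z.2 * (agree z.1 z.2)%:R / beta z.1.

Lemma g2_ge0 z : 0 <= g2 z.
Proof.
apply: divr_ge0; last exact/ltW/beta_gt0.
by apply: mulr_ge0; [apply: gprod_ge0 | rewrite ler0n].
Qed.

Lemma g2_m1 x : \sum_(y : S) g2 (x, y) = pi x.
Proof.
rewrite (eq_bigr (fun y => pi x / beta x * (init_law r y * (agree y x)%:R))); last first.
  by move=> y _; rewrite /g2 /= agreeC; ring.
rewrite -mulr_sumr (sum_agree r) // mulfVK //.
exact: lt0r_neq0 (beta_gt0 x).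
Qed.

Lemma g2_m2 y : \sum_(x : S) g2 (x, y) = init_law r y.
Proof.
rewrite (eq_bigr (fun x => init_law r y / beta y * (pi x * (agree x y)%:R))); last first.
  move=> x _; rewrite /g2 /=; case: (boolP (agree x y)) => h.
    by rewrite (beta_agree _ _ h); ring.
  by rewrite !mulr0 !mul0r.
rewrite -mulr_sumr.
have -> : \sum_(x : S) pi x * (agree x y)%:R = beta y.
  rewrite (eq_bigr (fun x => \sum_(x' : S) pi x' * (K x' x * (agree x y)%:R))); last first.
    by move=> x _; rewrite -stat_eq mulr_suml; apply: eq_bigr => x' _; rewrite mulrA.
  rewrite exchange_big /=.
  transitivity (\sum_(x' : S) pi x' * beta y); last by rewrite -mulr_suml pi_sum mul1r.
  apply: eq_bigr => x' _.
  rewrite -mulr_sumr; congr (_ * _); rewrite /kernel.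
  by apply: (sum_agree (fun i => p x' i)) => i hp; apply: p_principal.
rewrite mulfVK //; exact: lt0r_neq0 (beta_gt0 y).
Qed.

Lemma g2_ee0 j : pure_principal E j -> ee g2 0 j = 0.
Proof.
move=> hp; apply: big1 => z _ /=; rewrite /g2.
case: (boolP (agree z.1 z.2)) => h; last by rewrite !mulr0 !mul0r.
by move/forallP: h => /(_ j); rewrite hp /= => /eqP ->; rewrite eqxx mulr0.
Qed.

Lemma mxpow_path t k j : (mxpow M t) k j != 0 ->
  exists s, [/\ path E j s, size s = t & last j s = k].
Proof.
elim: t k => [|t IH] k.
  have -> : mxpow M 0 = 1%:M by [].
  rewrite mxE; case: (eqVneq k j) => [-> _ | _]; first by exists [::].
  by rewrite /= mulr0n eqxx.
have -> : mxpow M t.+1 = M *m mxpow M t by [].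
rewrite mxE => hs.
have [l hl] : exists l, M k l * mxpow M t l j != 0.
  apply/existsP; apply: contraR hs => /existsPn hn.
  by apply/eqP; apply: big1 => l _; apply/eqP; move: (hn l); rewrite negbK.
move: hl; rewrite mulf_eq0 negb_or => /andP [hM hP].
have [s [ps ss ls]] := IH l hP.
have ek : E l k.
  by apply: contraNT hM => ne; rewrite mxE w_zero // mulr0.
exists (rcons s k); split.
- by rewrite rcons_path ps ls.
- by rewrite size_rcons ss.
- by rewrite last_rcons.
Qed.

Lemma part2 d : max_path_length E d -> forall eps : R, 0 < eps ->
  exists m, tmix w r alpha pi eps = Some m /\ (m <= d)%N.
Proof.
move=> [_ hmax] eps he; apply: tmix_le.
apply: le_trans (dTV_bound _ g2_ge0 g2_m1 g2_m2 d) _.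
apply: le_trans (ltW he).
apply: (@le_trans _ _ (\sum_k \sum_j (mxpow M d) k j * ee g2 0 j)).
  by apply: ler_sum => k _; apply: ee_bound; apply: g2_ge0.
rewrite big1 // => k _; apply: big1 => j _.
case: (eqVneq ((mxpow M d) k j) 0) => [-> | hne]; first by rewrite mul0r.
have [s [ps ss ls]] := mxpow_path _ _ _ hne.
case: (boolP (pure_principal E j)) => hp; first by rewrite g2_ee0 // mulr0.
exfalso; move: hp; rewrite /pure_principal negbK => /existsP [i eij].
have := hmax i (j :: s); rewrite /= eij ps ss => /(_ isT).
by rewrite ltnn.
Qed.

Lemma mxpowD a b : mxpow M (a + b) = mxpow M a *m mxpow M b.
Proof.
elim: a => [|a IH].
  by rewrite add0n; have -> : mxpow M 0 = 1%:M by []; rewrite mul1mx.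
rewrite addSn.
have -> : mxpow M (a + b).+1 = M *m mxpow M (a + b) by [].
have -> : mxpow M a.+1 = M *m mxpow M a by [].
by rewrite IH mulmxA.
Qed.

Lemma norm_mul (A B : 'M[R]_n) :
  mx_inf_norm (A *m B) <= mx_inf_norm A * mx_inf_norm B.
Proof.
apply: norm_le; first by apply: mulr_ge0; apply: norm_ge0.
move=> i.
apply: (@le_trans _ _ (\sum_j \sum_l `|A i l| * `|B l j|)).
  apply: ler_sum => j _; rewrite mxE; apply: le_trans (ler_norm_sum _ _ _) _.
  by apply: ler_sum => l _; rewrite normrM.
rewrite exchange_big /=.
apply: (@le_trans _ _ (\sum_l `|A i l| * mx_inf_norm B)).
  apply: ler_sum => l _; rewrite -mulr_sumr; apply: ler_wpM2l => //.
  exact: le_norm.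
rewrite -mulr_suml; apply: ler_wpM2r; first exact: norm_ge0.
exact: le_norm.
Qed.

Lemma norm_id : mx_inf_norm (1%:M : 'M[R]_n) <= 1.
Proof.
apply: norm_le => // i.
rewrite (bigD1 i) //= big1 => [|j ji]; first by rewrite mxE eqxx /= mulr1n normr1 addr0.
by rewrite mxE eq_sym (negPf ji) /= mulr0n normr0.
Qed.

Definition rho := mx_inf_norm (mxpow M 2).

Lemma norm_pow2k k : mx_inf_norm (mxpow M (2 * k)) <= rho ^+ k.
Proof.
elim: k => [|k IH]; first by rewrite muln0 expr0; apply: norm_id.
rewrite mulnS mxpowD exprS.
apply: le_trans (norm_mul _ _) _.
by apply: ler_wpM2l; [apply: norm_ge0 | apply: IH].
Qed.

Lemma rs_le l : \sum_j M l j <= alpha l.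
Proof.
rewrite (eq_bigr (fun j => alpha l * w l j)); last by move=> j _; rewrite mxE.
rewrite -mulr_sumr; apply: ler_piMr; first by case/andP: (alpha01 l).
exact: w_sum_le1.
Qed.

Lemma rs_ge0 l : 0 <= \sum_j M l j.
Proof. by apply: sumr_ge0 => j _; apply: AW_ge0. Qed.

Lemma rho_lt1 : rho < 1.
Proof.
rewrite /rho /mx_inf_norm; apply: (big_ind (fun v => v < 1)) => //.
  by move=> a b ha hb; rewrite gt_max ha hb.
move=> i _.
have -> : mxpow M 2 = M *m (M *m 1%:M) by [].
rewrite mulmx1.
rewrite (eq_bigr (fun j => \sum_l M i l * M l j)); last first.
  move=> j _; rewrite mxE ger0_norm //.
  by apply: sumr_ge0 => l _; apply: mulr_ge0; apply: AW_ge0.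
rewrite exchange_big /=.
rewrite (eq_bigr (fun l => M i l * \sum_j M l j)); last by move=> l _; rewrite mulr_sumr.
have Mil l : M i l = alpha i * w i l by rewrite mxE.
case: (boolP (has_in E i)) => hi; last first.
  rewrite big1 // => l _; rewrite Mil w_zero ?mulr0 ?mul0r //.
  by apply: contra hi => el; apply/existsP; exists l.
case: (boolP (has_out E i)) => ho.
  apply: (@le_lt_trans _ _ (\sum_l M i l)).
    apply: ler_sum => l _; apply: ler_piMr; first exact: AW_ge0.
    by apply: le_trans (rs_le l) _; case/andP: (alpha01 l).
  rewrite (eq_bigr (fun l => alpha i * w i l)) // -mulr_sumr w_sumE hi mulr1.
  exact: alpha_lt1.
have a1 : alpha i = 1 by case: HC => _ _ _ [_ h _]; apply: h.
have [l0 el0] : exists l0, E l0 i by apply/existsP.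
rewrite (eq_bigr (fun l => w i l - w i l * (1 - \sum_j M l j))); last first.
  by move=> l _; rewrite Mil a1 mul1r; ring.
rewrite sumrB w_sumE hi.
have pos : 0 < \sum_l w i l * (1 - \sum_j M l j).
  rewrite (bigD1 l0) //=.
  have t0 : 0 < w i l0 * (1 - \sum_j M l0 j).
    apply: mulr_gt0; first exact: w_pos.
    rewrite subr_gt0; apply: le_lt_trans (rs_le l0) _; apply: alpha_lt1.
    by apply/existsP; exists i.
  have r0 : 0 <= \sum_(l | l != l0) w i l * (1 - \sum_j M l j).
    apply: sumr_ge0 => l _; apply: mulr_ge0; first exact: w_ge0.
    rewrite subr_ge0; apply: le_trans (rs_le l) _; by case/andP: (alpha01 l).
  by apply: lt_le_trans t0 _; rewrite lerDl.
by rewrite ltrBlDr ltrDl.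
Qed.

Lemma rho_ge0 : 0 <= rho.
Proof. exact: norm_ge0. Qed.

Lemma part3 (eps : R) : 0 < eps < 1 ->
  exists m, tmix w r alpha pi eps = Some m /\
    m%:R <= 2 + 2 / (1 - rho) * ln (n%:R / eps).
Proof.
case/andP=> e0 e1.
set L := ln (n%:R / eps).
have L0 : 0 <= L.
  rewrite /L; case: (posnP n) => [-> | n0].
    by rewrite mulr0n mul0r ln0.
  apply/ltW/ln_gt0; rewrite ltr_pdivlMr // mul1r.
  by apply: lt_le_trans e1 _; rewrite ler1n.
have r1 : 0 < 1 - rho by rewrite subr_gt0 rho_lt1.
set y := L / (1 - rho).
have y0 : 0 <= y by apply: divr_ge0 => //; apply: ltW.
set k := (Num.truncn y).+1.
have ky : y < k%:R by apply: truncnS_gt.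
have ky2 : k%:R <= y + 1.
  by rewrite /k -addn1 natrD lerD2r truncn_le y0.
have hd : dTV pi (law w r alpha (2 * k)) <= eps.
  apply: le_trans (part1 _) _.
  apply: (@le_trans _ _ (n%:R * rho ^+ k)).
    by apply: ler_wpM2l; [apply: ler0n | apply: norm_pow2k].
  case: (posnP n) => [-> | n0]; first by rewrite mulr0n mul0r; apply: ltW.
  have ex1 : rho ^+ k <= sequences.expR ((rho - 1) * k%:R).
    rewrite expRM_natr; apply: lerXn2r.
    - by rewrite nnegrE rho_ge0.
    - by rewrite nnegrE; apply/ltW/expR_gt0.
    by apply: le_trans (expR_ge1Dx _); rewrite addrC subrK.
  have ex2 : sequences.expR ((rho - 1) * k%:R) <= sequences.expR (- L).
    rewrite ler_expR.
    have : L < (1 - rho) * k%:R by rewrite mulrC -ltr_pdivrMr.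
    by move=> h; rewrite -opprB mulNr lerN2; apply: ltW.
  have ex3 : sequences.expR (- L) = eps / n%:R.
    rewrite expRN /L lnK ?invf_div //.
    by rewrite posrE divr_gt0 // ltr0n.
  apply: (@le_trans _ _ (n%:R * (eps / n%:R))).
    apply: ler_wpM2l; first exact: ler0n.
    by rewrite -ex3; apply: le_trans ex1 ex2.
  by rewrite mulrC divfK // pnatr_eq0 -lt0n.
have [m [hm hmk]] := tmix_le _ _ hd.
exists m; split => //.
apply: (@le_trans _ _ (2 * k)%:R); first by rewrite ler_nat.
rewrite natrM.
have -> : 2 / (1 - rho) * L = 2 * y by rewrite /y; ring.
rewrite -[X in X + _]mulr1 -mulrDr addrC.
by apply: ler_wpM2l => //; apply: ler0n.
Qed.

End Proofs.

Theorem mainTheorem11 (R : realType) (n : nat) (E : rel 'I_n) (w : 'M[R]_n)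
    (r alpha : 'I_n -> R) (pi : state n -> R) :
  contractor_network E w r alpha ->
  is_stationary w r alpha pi ->
  (forall t : nat,
      dTV pi (law w r alpha t) <= n%:R * mx_inf_norm (mxpow (AW w alpha) t)) /\
  (acyclic E -> forall d : nat, (0 < d)%N -> max_path_length E d ->
     forall eps : R, 0 < eps ->
       exists m : nat, tmix w r alpha pi eps = Some m /\ (m <= d)%N) /\
  (forall eps : R, 0 < eps < 1 ->
     exists m : nat, tmix w r alpha pi eps = Some m /\
       m%:R <= 2 + 2 / (1 - mx_inf_norm (mxpow (AW w alpha) 2)) * ln (n%:R / eps)).

Proof.
move=> HC HS; split; first exact: (part1 _ _ _ _ _ _ _ HC HS).
split.
  by move=> _ d _ hd eps he; exact: (part2 _ _ _ _ _ _ _ HC HS d hd eps he).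
by move=> eps he; exact: (part3 _ _ _ _ _ _ _ HC HS eps he).
Qed.
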